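(* Let $a$ and $b$ be relatively prime integers with $1<a<b$, let $(u,v)$ be the definitely least solution of $ax+by=1$, and let $S=\langle a,b\rangle$. Then $\min I(S)=F(S)-(|u|-1)a-(|v|-1)b$.
   Context: $\langle a,b\rangle=\{\lambda_1a+\lambda_2b:\lambda_1,\lambda_2\in\mathbb{N}\}$, with $\mathbb{N}$ the nonnegative integers. $F(S)$ is the Frobenius number of $S$, the largest integer not in $S$. An isolated gap of $S$ is an element $x\in\mathbb{N}\setminus S$ with $x-1,x+1\in S$; $I(S)$ is the set of isolated gaps. The definitely least solution $(u,v)$ of $ax+by=1$ is the unique integer solution with both $|u|$ and $|v|$ minimal; equivalently the solution with $|u|\le b/2$, $|v|\le a/2$. *)

(* Defs.v *)
From mathcomp Require Import all_boot all_order all_algebra.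
Import Order.TTheory GRing.Theory Num.Theory.
Local Open Scope ring_scope.

Definition in_numsg (a b : int) (x : int) : Prop :=
  exists l1 l2 : nat, x = l1%:Z * a + l2%:Z * b.

Definition is_frobenius (S : int -> Prop) (f : int) : Prop :=
  ~ S f /\ (forall x : int, f < x -> S x).

Definition isolated_gap (S : int -> Prop) (x : int) : Prop :=
  0 <= x /\ ~ S x /\ S (x - 1) /\ S (x + 1).

Definition is_min (P : int -> Prop) (m : int) : Prop :=
  P m /\ (forall x : int, P x -> m <= x).

Definition definitely_least (a b u v : int) : Prop :=
  a * u + b * v = 1 /\ 2 * `|u| <= b /\ 2 * `|v| <= a.

(* Main.v *)
Require Import Defs.
From mathcomp Require Import all_boot all_order all_algebra zify ring.
Import Order.TTheory GRing.Theory Num.Theory.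
Local Open Scope ring_scope.

Lemma canon (a b u v x : int) : 0 < a -> a*u + b*v = 1 ->
  exists i j, x = i*a + j*b /\ 0 <= j < a.
Proof.
move=> a0 e.
exists (x*u + ((x*v) %/ a)%Z * b), ((x*v) %% a)%Z.
split; last first.
  apply/andP; split; [apply: modz_ge0; lia | apply: ltz_pmod; lia].
have h := divz_eq (x*v) a.
set q := ((x*v) %/ a)%Z in h *; set r := ((x*v) %% a)%Z in h *.
have hx : x = x * (a*u + b*v) by rewrite e mulr1.
rewrite {1}hx.
have -> : x * (a*u + b*v) = (x*u)*a + (x*v)*b by ring.
rewrite h; ring.
Qed.

Lemma notin (a b u v i j : int) : 0 < a -> 0 < b -> a*u + b*v = 1 ->
  0 <= j < a -> i < 0 -> ~ in_numsg a b (i*a + j*b).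
Proof.
move=> a0 b0 e /andP[j0 ja] i0 [l1 [l2 h]].
set k := (j - l2%:Z)*u + (l1%:Z - i)*v.
have hk : j - l2%:Z = a * k.
  have : (j - l2%:Z) = (j - l2%:Z) * (a*u + b*v) by rewrite e mulr1.
  move=> ->; rewrite /k.
  have : (l1%:Z - i) * a = (j - l2%:Z) * b by rewrite mulrBl mulrBl; lia.
  move=> H.
  have -> : (j - l2%:Z) * (a * u + b * v) = (j - l2%:Z)*a*u + ((j - l2%:Z) * b)*v by ring.
  rewrite -H; ring.
have h2 : l1%:Z - i = k * b.
  have a0' : a != 0 by lia.
  apply: (mulfI a0').
  rewrite mulrA -hk.
  lia.
case: (lerP k 0) => hk0.
  have : k * b <= 0 by rewrite pmulr_lle0.
  lia.
have : a <= a * k by rewrite ler_peMr //; lia.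
lia.
Qed.

Lemma memS (a b i j : int) : 0 <= i -> 0 <= j -> in_numsg a b (i*a + j*b).
Proof.
move=> hi hj; exists `|i|%N, `|j|%N.
by rewrite !gez0_abs.
Qed.

Lemma main (a b u w : int) : 1 < a -> 1 < b -> a*u - b*w = 1 -> 0 < u -> 0 < w ->
  2*u <= b -> 2*w <= a ->
  is_min (isolated_gap (in_numsg a b)) (a*b - u*a - w*b).
Proof.
move=> a1 b1 e u0 w0 ub wa.
have a0 : 0 < a by lia.
have b0 : 0 < b by lia.
have e' : a*u + b*(-w) = 1 by lia.
have p1 : 2*u*a <= b*a by rewrite ler_pM2r.
have p2 : 2*w*b <= a*b by rewrite ler_pM2r.
split.
  split; first by lia.
  split.
    have -> : a*b - u*a - w*b = (-u)*a + (a-w)*b by lia.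
    apply: (notin _ _ _ _ _ _ a0 b0 e'); [apply/andP; split|]; lia.
  split.
    have -> : a*b - u*a - w*b - 1 = (b - 2*u)*a + 0*b by lia.
    apply: memS; lia.
  have -> : a*b - u*a - w*b + 1 = 0*a + (a - 2*w)*b by lia.
  apply: memS; lia.
move=> x [x0 [nx [xm xp]]].
have [i [j [hx /andP[j0 ja]]]] := canon a b u (-w) x a0 e'.
have i0 : i < 0.
  case: (ltrP i 0) => // hi; exfalso; apply: nx; rewrite hx; exact: memS.
have jw1 : a <= j + w.
  case: (ltrP (j+w) a) => // hjw; exfalso.
  move: xm; rewrite (_ : x - 1 = (i-u)*a + (j+w)*b); last by lia.
  apply: (notin _ _ _ _ _ _ a0 b0 e'); [apply/andP; split|]; lia.
have jw2 : w <= j.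
  case: (ltrP j w) => // hjw; exfalso.
  move: xp; rewrite (_ : x + 1 = (i+u-b)*a + (j-w+a)*b); last by lia.
  apply: (notin _ _ _ _ _ _ a0 b0 e'); [apply/andP; split|]; lia.
have iu : 0 <= i + u.
  case: (ltrP (i+u) 0) => // hiu; exfalso.
  move: xp; rewrite (_ : x + 1 = (i+u)*a + (j-w)*b); last by lia.
  apply: (notin _ _ _ _ _ _ a0 b0 e'); [apply/andP; split|]; lia.
have q1 : 0 <= (i+u)*a by apply: mulr_ge0; lia.
have q2 : 0 <= (j+w-a)*b by apply: mulr_ge0; lia.
lia.
Qed.

Lemma swapS a b x : in_numsg a b x -> in_numsg b a x.
Proof. by move=> [l1 [l2 ->]]; exists l2, l1; rewrite addrC. Qed.

Lemma swap_min a b m : is_min (isolated_gap (in_numsg b a)) m ->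
  is_min (isolated_gap (in_numsg a b)) m.
Proof.
move=> [[h0 [h1 [h2 h3]]] H]; split.
  split=> //; split; first by move/swapS.
  by split; apply: swapS.
move=> x [x0 [x1 [x2 x3]]]; apply: H.
split=> //; split; first by move/swapS.
by split; apply: swapS.
Qed.

Lemma frob a b u v F : 1 < a -> 1 < b -> a*u + b*v = 1 ->
  is_frobenius (in_numsg a b) F -> F = a*b - a - b.
Proof.
move=> a1 b1 e [nF HF].
have a0 : 0 < a by lia.
have b0 : 0 < b by lia.
have n0 : ~ in_numsg a b (a*b - a - b).
  rewrite (_ : a*b - a - b = (-1)*a + (a-1)*b); last by lia.
  apply: (notin _ _ _ _ _ _ a0 b0 e); [apply/andP; split|]; lia.
have H0 : forall y, a*b - a - b < y -> in_numsg a b y.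
  move=> y hy.
  have [i [j [hx /andP[j0 ja]]]] := canon a b u v y a0 e.
  case: (ltrP i 0) => hi; last by rewrite hx; exact: memS.
  have q1 : i*a <= -a by rewrite -mulN1r ler_pM2r //; lia.
  have q2 : j*b <= (a-1)*b by rewrite ler_pM2r //; lia.
  lia.
case: (ltrgtP F (a*b - a - b)) => // h.
- by exfalso; apply: n0; apply: HF.
- by exfalso; apply: nF; apply: H0.
Qed.

Theorem proposition4p9 (a b u v F : int) :
  1 < a -> a < b -> coprimez a b ->
  definitely_least a b u v ->
  is_frobenius (in_numsg a b) F ->
  is_min (isolated_gap (in_numsg a b))
         (F - (`|u| - 1) * a - (`|v| - 1) * b).
Proof.
move=> a1 ab _ [e [hu hv]] hF.
have b1 : 1 < b by lia.
rewrite (frob a b u v F a1 b1 e hF).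
case: (ltrgtP u 0) => hu0.
- have hv0 : 0 < v.
    case: (ltrP 0 v) => // hv'.
    have : a*u < 0 by rewrite pmulr_rlt0 //; lia.
    have : b*v <= 0 by rewrite pmulr_rle0 //; lia.
    lia.
  rewrite ltr0_norm // gtr0_norm //.
  apply: swap_min.
  rewrite (_ : a*b - a - b - (- u - 1) * a - (v - 1) * b = b*a - v*b - (-u)*a); last by lia.
  apply: main; try lia.
- have hv0 : v < 0.
    case: (ltrP v 0) => // hv'.
    have : a <= a*u by rewrite ler_peMr //; lia.
    have : 0 <= b*v by rewrite mulr_ge0 //; lia.
    lia.
  rewrite gtr0_norm // ltr0_norm //.
  rewrite (_ : a*b - a - b - (u - 1) * a - (- v - 1) * b = a*b - u*a - (-v)*b); last by lia.
  apply: main; try lia.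
- exfalso; move: e; rewrite hu0 mulr0 add0r => e.
  case: (ltrP 0 v) => hv'.
    have : b <= b*v by rewrite ler_peMr //; lia.
    lia.
  have : b*v <= 0 by rewrite pmulr_rle0 //; lia.
  lia.
Qed.
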